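(* Let $N$ and $T$ be integers with $0\le T \le N$, and let $F(T) = T + \lfloor T^2/4\rfloor + 1$. Let $\mathcal{G}=(\mathcal{V},\mathcal{E})$ be a finite undirected graph (self-loops allowed) with $N-T \le |\mathcal{V}| \le N$ in which every vertex has a self-loop. Let $V'$ be the set of vertices contained in a clique of size at least $N-T$, and suppose $V'\ne\emptyset$. Let $$V^* = \{v\in V' : (v,\tilde v)\in\mathcal{E}\ \text{for all } \tilde v \in V'\}.$$ Then $|V^*| \ge N - F(T)$.
   Context: A clique is a set of distinct vertices that are pairwise joined by edges. *)

(* Defs.v *)
From mathcomp Require Import all_boot.
Set Implicit Arguments. Unset Strict Implicit. Unset Printing Implicit Defensive.

Definition Fbound (T : nat) : nat := T + (T * T) %/ 4 + 1.

Definition is_clique (V : finType) (e : rel V) (K : {set V}) : bool :=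
  [forall x in K, forall y in K, (x != y) ==> e x y].

Definition Vprime (V : finType) (e : rel V) (m : nat) : {set V} :=
  [set v | [exists K : {set V}, [&& v \in K, is_clique e K & m <= #|K|]]].

Definition Vstar (V : finType) (e : rel V) (m : nat) : {set V} :=
  [set v in Vprime e m | [forall w in Vprime e m, e v w]].

(* Main.v *)
Require Import Defs.
From mathcomp Require Import all_boot.
From mathcomp Require Import zify.
Set Implicit Arguments. Unset Strict Implicit. Unset Printing Implicit Defensive.

Lemma clique_adj (V : finType) (e : rel V) (hl : reflexive e) (K : {set V}) x y :
  is_clique e K -> x \in K -> y \in K -> e x y.
Proof.
move=> /forallP /(_ x) /implyP H xK yK.
move: (H xK) => /forallP /(_ y) /implyP /(_ yK).
have [->|nxy] := eqVneq x y; first by rewrite hl.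
by [].
Qed.

Lemma adj_clique (V : finType) (e : rel V) (K : {set V}) :
  (forall x y, x \in K -> y \in K -> e x y) -> is_clique e K.
Proof.
move=> H; apply/forallP=> x; apply/implyP=> xK; apply/forallP=> y.
apply/implyP=> yK; apply/implyP=> _; exact: H.
Qed.

Lemma arith_bound (a e T : nat) : a + e <= T -> a * e + a <= e + (T * T) %/ 4 + 1.
Proof.
case: a => [|b] H; first by lia.
have h4 : b * (e + 1) <= (T * T) %/ 4.
  rewrite leq_divRL //.
  have H2 : b + (e + 1) <= T by lia.
  have H3 : (b + (e + 1)) * (b + (e + 1)) <= T * T by apply: leq_mul.
  have H4 : b * (e + 1) * 4 <= (b + (e + 1)) * (b + (e + 1)).
    have : 0 <= (b - (e+1)) * (b - (e+1)) + ((e+1) - b) * ((e+1) - b) by [].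
    case: (leqP b (e+1)) => Hb; nia.
  exact: leq_trans H4 H3.
nia.
Qed.

Lemma step (V : finType) (e : rel V) (hsym : symmetric e) (hl : reflexive e)
  (K C Z Y : {set V}) (m : nat)
  (hK : is_clique e K) (hmax : forall C, is_clique e C -> #|C| <= #|K|)
  (hC : is_clique e C) (hm : m <= #|C|)
  (hZY : forall p q, p \in Y -> q \in K -> q \notin Z -> e p q) :
  #|(K :\: C) :\: Z| + m <= #|K| + #|(C :\: K) :\: Y|.
Proof.
set P := (C :\: K) :&: Y.
set X := (K :\: C) :&: Z.
set Q := P :|: (K :\: X).
have adjPK : forall p q, p \in P -> q \in K :\: X -> e p q.
  move=> p q; rewrite !inE => /andP [/andP [pK pC] pY] /andP [qX qK].
  have [qC|qC] := boolP (q \in C); first exact: (clique_adj hl hC).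
  apply: hZY => //; apply: contra qX => qZ; by rewrite qC qK qZ.
have cQ : is_clique e Q.
  apply: adj_clique => x y; rewrite /Q !in_setU.
  move=> Hx Hy.
  have [xP|xnP] := boolP (x \in P); have [yP|ynP] := boolP (y \in P).
  - move: xP yP; rewrite !inE => /andP [/andP [_ xC] _] /andP [/andP [_ yC] _].
    exact: (clique_adj hl hC).
  - apply: adjPK => //; move: Hy; by rewrite (negbTE ynP).
  - rewrite hsym; apply: adjPK => //; move: Hx; by rewrite (negbTE xnP).
  - move: Hx Hy; rewrite (negbTE xnP) (negbTE ynP) /= /X !inE => /andP [_ xK] /andP [_ yK].
    exact: (clique_adj hl hK).
have := hmax _ cQ.
have disj : P :&: (K :\: X) = set0.
  apply/setP=> x; rewrite !inE; by case: (x \in K); rewrite ?andbF ?andbT //= !andbF.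
rewrite /Q cardsU disj cards0.
have XK : K :&: X = X.
  apply/setIidPr; apply/subsetP=> x; rewrite !inE => /andP [/andP [_ ->] _].
  by [].
have h1 := cardsID X K. rewrite XK in h1.
have h2 := cardsID Z (K :\: C).
have h3 := cardsID C K.
have h4 := cardsID K C.
have h5 := cardsID Y (C :\: K).
rewrite setIC in h4.
rewrite /X in h1 *.
rewrite /P.
lia.
Qed.

Lemma sub_bigcup_seq (V : finType) (I : eqType) (s : seq I) (F : I -> {set V}) x :
  x \in s -> F x \subset \bigcup_(y <- s) F y.
Proof.
elim: s => //= y s IH; rewrite inE big_cons => /orP [/eqP->|/IH H].
  exact: subsetUl.
exact: subset_trans H (subsetUr _ _).
Qed.

Lemma bigcup_seq_sub (V : finType) (I : Type) (s : seq I) (F : I -> {set V}) (A : {set V}) :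
  (forall x, F x \subset A) -> \bigcup_(y <- s) F y \subset A.
Proof.
move=> H; elim: s => [|y s IH]; first by rewrite big_nil sub0set.
by rewrite big_cons subUset H IH.
Qed.

Theorem mainTheorem6 (N T : nat) (V : finType) (e : rel V)
  (hTN : T <= N)
  (hsym : symmetric e) (hloop : reflexive e)
  (hV : N - T <= #|V| <= N)
  (hV' : Vprime e (N - T) != set0) :
  N - Fbound T <= #|Vstar e (N - T)|.
Proof.
set m := N - T.
move: hV' => /set0Pn [v0]; rewrite inE => /existsP [K0 /and3P [_ cK0 mK0]].
case: (arg_maxnP (fun K : {set V} => #|K|) cK0) => K cK maxK.
have hmax : forall C, is_clique e C -> #|C| <= #|K| by move=> C /maxK.
have mK : m <= #|K| := leq_trans mK0 (hmax _ cK0).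
pose c (w : V) := odflt set0 [pick C : {set V} | [&& w \in C, is_clique e C & m <= #|C|]].
have hc : forall w, w \in Vprime e m -> [&& w \in c w, is_clique e (c w) & m <= #|c w|].
  move=> w; rewrite inE => /existsP [C HC]; rewrite /c.
  case: pickP => [C' HC'|/(_ C)] /=; first exact: HC'.
  by rewrite HC.
have hcV : forall w, c w \subset Vprime e m.
  move=> w; rewrite /c; case: pickP => [C' /and3P [_ cC mC]|_] /=; last exact: sub0set.
  apply/subsetP=> x xC; rewrite inE; apply/existsP; exists C'; by rewrite xC cC mC.
set W := Vprime e m :\: K.
have ind : forall s : seq V, all (fun w => w \in Vprime e m) s ->
   (#|\bigcup_(w <- s) (K :\: c w)| + size s * m <= size s * #|K| + #|\bigcup_(w <- s) (c w :\: K)|)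
   /\ (forall p q, p \in \bigcup_(w <- s) (c w :\: K) -> q \in K ->
                   q \notin \bigcup_(w <- s) (K :\: c w) -> e p q).
  elim=> [|w s IH] /=.
    by rewrite !big_nil !cards0; split => // p q; rewrite inE.
  move=> /andP [ws /IH [IH1 IH2]].
  have /and3P [_ cw mw] := hc w ws.
  have st := step hsym hloop cK hmax cw mw IH2.
  rewrite !big_cons; split.
    set Z := \bigcup_(w <- s) (K :\: c w) in IH1 IH2 st *.
    set Y := \bigcup_(w <- s) (c w :\: K) in IH1 IH2 st *.
    have a1 := cardsU (K :\: c w) Z.
    have a2 := cardsID Z (K :\: c w).
    have a3 := cardsU (c w :\: K) Y.
    have a4 := cardsID Y (c w :\: K).

    have a5 := cardsID (c w :\: K) Y.
    rewrite setIC in a5.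
    rewrite !mulSn.
    lia.
  move=> p q; rewrite !in_setU => /orP [pw|pY] qK.
    rewrite negb_or => /andP [qw _].
    have qc : q \in c w by move: qw; rewrite !inE qK andbT negbK.
    move: pw; rewrite inE => /andP [_ pc].
    exact: (clique_adj hloop cw).
  rewrite negb_or => /andP [_ qZ]; exact: IH2.
have allW : all (fun w => w \in Vprime e m) (enum W).
  apply/allP=> w; rewrite mem_enum inE => /andP [_ ->]; by [].
have [ind1 _] := ind _ allW.
set U := \bigcup_(w <- enum W) (K :\: c w) in ind1.
have Ysub : \bigcup_(w <- enum W) (c w :\: K) \subset W.
  apply: bigcup_seq_sub => w; rewrite /W; apply: setSD; exact: hcV.
have Ycard := subset_leq_card Ysub.
rewrite -cardE in ind1.
have KU : K :\: U \subset Vstar e m.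
  apply/subsetP=> v; rewrite inE => /andP [vU vK].
  have vV : v \in Vprime e m by rewrite inE; apply/existsP; exists K; rewrite vK cK mK.
  rewrite inE vV /=; apply/forallP=> w; apply/implyP=> wV.
  have [wK|wK] := boolP (w \in K); first exact: (clique_adj hloop cK).
  have wW : w \in enum W by rewrite mem_enum inE wV wK.
  have /subsetP sub := sub_bigcup_seq (fun w => K :\: c w) wW.
  have vc : v \in c w.
    apply: contraR vU => vc; apply: sub; by rewrite inE vc vK.
  have /and3P [wc cw _] := hc w wV.
  exact: (clique_adj hloop cw).
have s1 := subset_leq_card KU.
have s2 := cardsID U K.
have s3 : #|K :&: U| <= #|U| by apply: subset_leq_card; apply: subsetIr.
have WK : #|W| + #|K| <= #|V|.
  have := cardsC K.
  have : #|W| <= #|~: K| by apply: subset_leq_card; apply/subsetP=> x; rewrite !inE => /andP [->].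
  lia.
have ke : #|K| = m + (#|K| - m) by lia.
have ab := arith_bound (a:=#|W|) (e:=#|K| - m) (T:=T).
rewrite ke mulnDr in ind1.
rewrite /Fbound.
move: hV => /andP [h1 h2].
rewrite /m in mK ke ind1.
lia.
Qed.
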